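(* Let $0<\alpha<\beta$ and $t\ge1$. Define $\mathcal{P}_t''$ to be the set of real polynomials $f$ of degree at most $t$ such that $f(0)=0$, $f$ is $t$-equioscillatory on $[0,\alpha]$, and $f(\beta)=1$. Then the problem \[ \min_{f\in\mathcal{P}_t''}\ \max_{\lambda\in[0,\alpha]}|f(\lambda)| \] is solved by \[ f_t^\star(\lambda)=\prod_{s=0}^{t-1}\frac{\lambda-r_{s,t}}{\beta-r_{s,t}},\qquad r_{s,t}:=\alpha\,\frac{\cos\!\big(\frac{\pi(s+1/2)}{t}\big)+\cos\!\big(\frac{\pi}{2t}\big)}{1+\cos\!\big(\frac{\pi}{2t}\big)}; \] that is, $f_t^\star\in\mathcal{P}_t''$ and $\max_{[0,\alpha]}|f_t^\star|\le\max_{[0,\alpha]}|g|$ for every $g\in\mathcal{P}_t''$.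
   Context: A polynomial $f$ is called $t$-equioscillatory on an interval $[a,b]$ if there exist points $a\le\gamma_0<\gamma_1<\dots<\gamma_{t-1}\le b$ such that $|f(\gamma_s)|=\max_{\lambda\in[a,b]}|f(\lambda)|$ for all $0\le s\le t-1$ and $f(\gamma_0)=-f(\gamma_1)=f(\gamma_2)=-f(\gamma_3)=\cdots$. *)

(* Defs.v *)
From HB Require Import structures.
From mathcomp Require Import all_boot all_order all_algebra.
From mathcomp Require Import all_classical all_reals.
From mathcomp Require Import topology normedtype trigo.
Set Implicit Arguments. Unset Strict Implicit. Unset Printing Implicit Defensive.
Import Order.TTheory GRing.Theory Num.Theory.
Local Open Scope ring_scope.
Local Open Scope classical_set_scope.

(* max_{lambda in [a,b]} |f(lambda)|, written as the supremum of the image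
   (for a <= b and f a polynomial this supremum is attained, i.e. a max). *)
Definition supnorm (R : realType) (a b : R) (f : {poly R}) : R :=
  sup [set `|f.[x]| | x in [set x : R | a <= x <= b]].

Definition equiosc (R : realType) (t : nat) (a b : R) (f : {poly R}) : Prop :=
  exists gamma : nat -> R,
    [/\ (forall s, (s < t)%N -> a <= gamma s <= b),
        (forall s, (s.+1 < t)%N -> gamma s < gamma s.+1),
        (forall s, (s < t)%N -> `|f.[gamma s]| = supnorm a b f) &
        (forall s, (s < t)%N -> f.[gamma s] = (-1) ^+ s * f.[gamma 0%N])].

Definition Ptpp (R : realType) (t : nat) (alpha beta : R) (f : {poly R}) : Prop :=
  [/\ (size f <= t.+1)%N, f.[0] = 0, equiosc t 0 alpha f & f.[beta] = 1].

Definition rst (R : realType) (alpha : R) (t s : nat) : R :=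
  alpha * (cos (pi * (s%:R + 2^-1) / t%:R) + cos (pi / (2 * t%:R)))
        / (1 + cos (pi / (2 * t%:R))).

Definition fstar (R : realType) (alpha beta : R) (t : nat) : {poly R} :=
  \prod_(s < t) (('X - (rst alpha t s)%:P) * ((beta - rst alpha t s)^-1)%:P).

(* Main.v *)
Require Import Defs.
From HB Require Import structures.
From mathcomp Require Import all_boot all_order all_algebra.
From mathcomp Require Import all_classical all_reals.
From mathcomp Require Import topology normedtype trigo derive.
From mathcomp Require Import ring lra zify.
Import Order.TTheory GRing.Theory Num.Theory.
Import numFieldNormedType.Exports.
Set Implicit Arguments. Unset Strict Implicit.
Local Open Scope ring_scope.

Section Cheb.
Variable R : realType.

Fixpoint cheb (n : nat) : {poly R} :=
  match n with
  | 0%N => 1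
  | m.+1 => match m with
            | 0%N => 'X
            | k.+1 => 2%:R *: (cheb m * 'X) - cheb k
            end
  end.

Lemma chebSS n : cheb n.+2 = 2%:R *: (cheb n.+1 * 'X) - cheb n.
Proof. by []. Qed.

Lemma cheb_cos n x : (cheb n).[cos x] = cos (n%:R * x).
Proof.
suff : (cheb n).[cos x] = cos (n%:R * x) /\ (cheb n.+1).[cos x] = cos (n.+1%:R * x) by case.
elim: n => [|n [IH1 IH2]].
  by rewrite /= hornerX hornerC mul0r cos0 mul1r.
split => //.
rewrite chebSS hornerD hornerN hornerZ hornerMX IH1 IH2.
have -> : n.+2%:R * x = n.+1%:R * x + x by rewrite -addn1 natrD mulrDl mul1r.
have -> : n%:R * x = n.+1%:R * x - x by rewrite -addn1 natrD mulrDl mul1r addrK.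
rewrite !cosD cosN sinN; lra.
Qed.

Lemma cheb_size_lead n :
  size (cheb n) = n.+1 /\ lead_coef (cheb n) = 2%:R ^+ n.-1.
Proof.
suff : (size (cheb n) = n.+1 /\ lead_coef (cheb n) = 2%:R ^+ n.-1) /\
       (size (cheb n.+1) = n.+2 /\ lead_coef (cheb n.+1) = 2%:R ^+ n) by case.
elim: n => [|n [[s1 l1] [s2 l2]]].
  by rewrite /= size_poly1 lead_coef1 size_polyX lead_coefX expr0.
split => //.
have h2 : (2%:R : R) != 0 by rewrite pnatr_eq0.
have c2 : cheb n.+1 != 0 by rewrite -size_poly_eq0 s2.
have sz : size (2%:R *: (cheb n.+1 * 'X)) = n.+3.
  by rewrite size_scale // size_mulX // s2.
rewrite chebSS; split.
  by rewrite size_addl sz // size_opp s1 ltnS leqW.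
rewrite lead_coefDl ?size_opp ?sz ?s1 ?ltnS ?leqW //.
by rewrite lead_coefZ lead_coefMX l2 /= exprS.
Qed.


Definition th (t s : nat) : R := pi * (s%:R + 2^-1) / t%:R.

Lemma frac_itv (a : R) (t : nat) : (0 < t)%N -> 0 <= a <= t%:R ->
  0 <= pi * a / t%:R <= pi.
Proof.
move=> t0 /andP[a0 at_]; have tp : (0 : R) < t%:R by rewrite ltr0n.
have pp := pi_gt0 R.
apply/andP; split; first by rewrite divr_ge0 // mulr_ge0 // ltW.
rewrite ler_pdivrMr //; apply: ler_wpM2l => //; exact: ltW.
Qed.

Lemma th_itv t s : (s < t)%N -> th t s \in `[0, pi].
Proof.
move=> st; rewrite in_itv /=; apply: frac_itv; first exact: leq_ltn_trans st.
have : (s.+1%:R : R) <= t%:R by rewrite ler_nat.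
rewrite -addn1 natrD => h.
have h2 : (0:R) <= 2^-1 by lra.
have h2' : (2^-1 : R) <= 1 by lra.
have h3 : (0:R) <= s%:R by rewrite ler0n.
lra.
Qed.

Lemma cheb_factor t : (0 < t)%N ->
  cheb t = 2%:R ^+ t.-1 *: \prod_(s < t) ('X - (cos (th t s))%:P).
Proof.
move=> t0.
have -> : \prod_(s < t) ('X - (cos (th t s))%:P) =
          \prod_(z <- [seq cos (th t s) | s <- iota 0 t]) ('X - z%:P).
  by rewrite big_map -(big_mkord xpredT (fun s => 'X - (cos (th t s))%:P)) /index_iota subn0.
have [sz ld] := cheb_size_lead t.
rewrite -ld; apply: all_roots_prod_XsubC.
- by rewrite size_map size_iota.
- apply/allP => z /mapP [s]; rewrite mem_iota add0n => /andP[_ hs] ->.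
  rewrite /root cheb_cos.
  have -> : t%:R * th t s = 0 + pi / 2 + pi *+ s.
    rewrite /th -mulr_natr; field; by rewrite pnatr_eq0 -lt0n.
  by rewrite (alternatingn (@cosDpi R)) add0r cos_pihalf mulr0.
- rewrite uniq_rootsE map_inj_in_uniq ?iota_uniq //.
  move=> i j; rewrite !mem_iota !add0n => /andP[_ hi] /andP[_ hj].
  move/(cos_inj (th_itv hi) (th_itv hj)); rewrite /th => h.
  have : (i%:R : R) = j%:R.
    have tn : (t%:R : R) != 0 by rewrite pnatr_eq0 -lt0n.
    have pn : pi != 0 :> R by rewrite gt_eqF // pi_gt0.
    apply: (addIr (2^-1)); apply: (mulfI pn); apply: (mulIf (invr_neq0 tn)).
    exact: h.
  by move/eqP; rewrite eqr_nat => /eqP.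
Qed.

Lemma prod_cheb t x : (0 < t)%N ->
  \prod_(s < t) (x - cos (th t s)) = (cheb t).[x] / 2%:R ^+ t.-1.
Proof.
move=> t0; rewrite cheb_factor // hornerZ horner_prod.
under eq_bigr do rewrite hornerXsubC.
by rewrite mulrAC divff ?mul1r // expf_neq0 // pnatr_eq0.
Qed.

Lemma cheb_bound t x : -1 <= x <= 1 -> `|(cheb t).[x]| <= 1.
Proof.
by move=> hx; rewrite -(@acosK R x) ?in_itv // cheb_cos cos_max.
Qed.

Lemma cheb_ext t k : (0 < t)%N -> (cheb t).[cos (pi * k%:R / t%:R)] = (-1) ^+ k.
Proof.
move=> t0; rewrite cheb_cos.
have -> : t%:R * (pi * k%:R / t%:R) = 0 + pi *+ k :> R.
  by rewrite -mulr_natr; field; rewrite pnatr_eq0 -lt0n.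
by rewrite (alternatingn (@cosDpi R)) cos0 mulr1.
Qed.

Lemma sup_max (S : set R) m : S m -> (forall y, S y -> y <= m) -> sup S = m.
Proof.
move=> Sm ub; apply/le_anti/andP; split.
  by apply: ge_sup; [exists m | exact: ub].
by apply: sup_upper_bound => //; split; [exists m | exists m].
Qed.

End Cheb.
Arguments th {R}.
Arguments cheb {R}.

Section Main.
Variable R : realType.
Variables (alpha beta : R) (t : nat).
Hypotheses (h0 : 0 < alpha) (hab : alpha < beta) (ht : (1 <= t)%N).

Local Notation c := (cos (pi / (2 * t%:R)) : R).
Local Notation K := (alpha / (1 + c)).
Definition xf (l : R) := l / K - c.

Lemma tR0 : (0 : R) < t%:R. Proof. by rewrite ltr0n. Qed.

Lemma pi2t : 0 < (pi : R) / (2 * t%:R) <= (pi : R) / 2.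
Proof.
have tp := tR0; have pp := pi_gt0 R.
have -> : pi / (2 * t%:R) = (pi / 2) * t%:R^-1 :> R by rewrite invfM mulrA.
have ti : 0 < (t%:R : R)^-1 <= 1.
  by rewrite invr_gt0 tp /= invf_le1 // ler1n.
have p2 : 0 < (pi : R) / 2 by rewrite divr_gt0.
nra.
Qed.

Lemma c_ge0 : 0 <= c.
Proof.
have := pi2t; have := pi_gt0 R => pp h.
apply: cos_ge0_pihalf; have p2 : 0 < (pi : R) / 2 by rewrite divr_gt0.
lra.
Qed.

Lemma c_le1 : c <= 1. Proof. exact: cos_le1. Qed.

Lemma K_gt0 : 0 < K.
Proof. by rewrite divr_gt0 // ltr_wpDr ?c_ge0. Qed.

Lemma Kc : K * (1 + c) = alpha.
Proof. have := c_ge0 => h; rewrite divfK // gt_eqF //; lra. Qed.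

Lemma rstE s : rst alpha t s = K * (cos (th t s) + c).
Proof. by rewrite /rst /th mulrAC. Qed.

Lemma xfK l : K * (xf l + c) = l.
Proof. by rewrite /xf subrK mulrC divfK // gt_eqF // K_gt0. Qed.

Lemma xf_gt1 : 1 < xf beta.
Proof.
have kp := K_gt0; have := Kc; rewrite /xf => e.
rewrite ltrBrDr ltr_pdivlMr // mulrC e; exact: hab.
Qed.

Lemma Q_gt0 : 0 < \prod_(s < t) (xf beta - cos (th t s)).
Proof.
apply: prodr_gt0 => s _; have := xf_gt1; have := @cos_le1 R (th t s); lra.
Qed.

Lemma fstar_eval l : (fstar alpha beta t).[l] =
  \prod_(s < t) (xf l - cos (th t s)) / \prod_(s < t) (xf beta - cos (th t s)).
Proof.
rewrite /fstar horner_prod -prodf_div; apply: eq_bigr => s _.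
rewrite hornerM hornerXsubC hornerC rstE.
have kp := K_gt0; have hb : xf beta - cos (th t s) != 0.
  by rewrite gt_eqF // subr_gt0 (le_lt_trans (cos_le1 _) xf_gt1).
rewrite -{1}(xfK l) -{1}(xfK beta) -!mulrBr -mulf_div divff ?gt_eqF // mul1r.
have e : forall x y z : R, (x + z) - (y + z) = x - y by move=> *; lra.
by rewrite !e.
Qed.

Definition D := (cheb t).[xf beta].

Lemma D_gt0 : 0 < D.
Proof.
have := Q_gt0; rewrite prod_cheb // => h.
rewrite /D; have e : (0:R) < 2%:R ^+ t.-1 by rewrite exprn_gt0 // ltr0n.
have e' : (2%:R ^+ t.-1 : R) != 0 by rewrite gt_eqF.
by rewrite -(divfK e' (cheb t).[xf beta]) mulr_gt0.
Qed.

Lemma fstar_cheb l : (fstar alpha beta t).[l] = (cheb t).[xf l] / D.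
Proof.
rewrite fstar_eval !prod_cheb // /D.
have e : (2%:R ^+ t.-1 : R) != 0 by rewrite expf_neq0 // pnatr_eq0.
have Dn : (cheb t).[xf beta] != 0 by rewrite gt_eqF // D_gt0.
by field; rewrite Dn e.
Qed.

Definition ang (k : nat) : R := pi * k%:R / t%:R.

Lemma ang_itv k : (k <= t.-1)%N -> ang k \in `[0, pi].
Proof.
move=> kt; rewrite in_itv /=; apply: frac_itv => //.
rewrite ler0n ler_nat /=; apply: (leq_trans kt); exact: leq_pred.
Qed.

Lemma ang_lt k : (k <= t.-1)%N -> ang k < pi - pi / (2 * t%:R).
Proof.
move=> kt; have tp := tR0; have pp := pi_gt0 R.
have u0 : 0 < pi / t%:R :> R by rewrite divr_gt0.
have e1 : ang k = (pi / t%:R) * k%:R by rewrite /ang mulrAC.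
have e2 : pi = (pi / t%:R) * t%:R :> R by rewrite divfK // gt_eqF.
have e3 : pi / (2 * t%:R) = (pi / t%:R) / 2 :> R.
  by field; rewrite pnatr_eq0 -lt0n.
have kt' : (k%:R + 1 : R) <= t%:R.
  by rewrite natr1 ler_nat; lia.
rewrite e1 e3 [X in _ < X - _]e2; set u := pi / t%:R.
have h : 0 <= u * (t%:R - (k%:R + 1)) by apply: mulr_ge0; [exact: ltW | rewrite subr_ge0].
have u0' : 0 < u by []. nra.
Qed.

Lemma cos_pi_sub a : cos (pi - a) = - cos a :> R.
Proof. by rewrite cosB cospi sinpi mul0r addr0 mulN1r. Qed.

Lemma cos_ang_gt k : (k <= t.-1)%N -> - c < cos (ang k).
Proof.
move=> kt; rewrite -cos_pi_sub ltr_cos ?ang_lt ?ang_itv //.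
have := pi2t; have pp := pi_gt0 R; rewrite in_itv /= => h.
have p2 : 0 < (pi : R) / 2 by rewrite divr_gt0.
apply/andP; split; lra.
Qed.

Definition gam (s : nat) : R := K * (cos (ang (t.-1 - s)) + c).

Lemma gam_pos s : 0 < gam s.
Proof.
rewrite /gam mulr_gt0 ?K_gt0 //; have := cos_ang_gt (leq_subr s t.-1); lra.
Qed.

Lemma gam_le s : gam s <= alpha.
Proof.
rewrite /gam -[X in _ <= X]Kc ler_pM2l ?K_gt0 // lerD2r; exact: cos_le1.
Qed.

Lemma gam_inc i j : (i < j)%N -> (j < t)%N -> gam i < gam j.
Proof.
move=> ij jt; rewrite /gam ltr_pM2l ?K_gt0 // ltrD2r.
rewrite ltr_cos ?ang_itv ?leq_subr //.
rewrite /ang ltr_pM2r ?invr_gt0 ?tR0 // ltr_pM2l ?pi_gt0 // ltr_nat.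
lia.
Qed.

Lemma xf_gam s : xf (gam s) = cos (ang (t.-1 - s)).
Proof. by rewrite /xf /gam mulrAC divff ?mul1r ?addrK // gt_eqF // K_gt0. Qed.

Lemma fstar_gam s : (fstar alpha beta t).[gam s] = (-1) ^+ (t.-1 - s) / D.
Proof. by rewrite fstar_cheb xf_gam /ang cheb_ext. Qed.

Lemma xf_itv l : 0 <= l <= alpha -> -1 <= xf l <= 1.
Proof.
move=> /andP[l0 la]; have kp := K_gt0; have c0 := c_ge0; have c1 := c_le1.
have : 0 <= l / K by rewrite divr_ge0 // ltW.
have : l / K <= 1 + c by rewrite ler_pdivrMr // mulrC Kc.
rewrite /xf => *; apply/andP; split; lra.
Qed.

Lemma supnorm_fstar : supnorm 0 alpha (fstar alpha beta t) = D^-1.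
Proof.
have Dp := D_gt0.
apply: sup_max.
  exists (gam 0%N); first by rewrite /= (ltW (gam_pos _)) gam_le.
  by rewrite fstar_gam normrM normrX normrN normr1 expr1n mul1r normfV gtr0_norm.
move=> y [l /= hl <-]; rewrite fstar_cheb normrM normfV (gtr0_norm Dp).
rewrite -[X in _ <= X]mul1r ler_wpM2r ?invr_ge0 ?(ltW Dp) //.
exact/cheb_bound/xf_itv.
Qed.

Lemma size_fstar : (size (fstar alpha beta t) <= t.+1)%N.
Proof.
rewrite /fstar big_split /= -(rmorph_prod (@polyC R)).
apply: leq_trans (size_polyMleq _ _) _.
rewrite size_prod_XsubC.
have -> : size (index_enum 'I_t) = t by rewrite -[RHS]card_ord cardT enumT.
by rewrite addSn /= -addn1 leq_add2l size_polyC_leq1.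
Qed.

Lemma fstar0 : (fstar alpha beta t).[0] = 0.
Proof.
have tt : t%:R = (t.-1)%:R + 1 :> R by rewrite natr1 prednK.
have e : th t t.-1 = pi - pi / (2 * t%:R) :> R.
  rewrite /th tt; field; rewrite -tt pnatr_eq0 -lt0n //.
have lt : (t.-1 < t)%N by rewrite ltn_predL.
rewrite fstar_eval (bigD1 (Ordinal lt)) //= e cos_pi_sub /xf mul0r sub0r.
by rewrite opprK addNr !mul0r.
Qed.

Lemma fstar_beta : (fstar alpha beta t).[beta] = 1.
Proof. by rewrite fstar_cheb /D divff // gt_eqF // D_gt0. Qed.

Lemma fstar_equiosc : equiosc t 0 alpha (fstar alpha beta t).
Proof.
exists gam; split.
- by move=> s _; rewrite (ltW (gam_pos _)) gam_le.
- by move=> s st; apply: gam_inc.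
- move=> s _; rewrite supnorm_fstar fstar_gam normrM normrX normrN normr1.
  by rewrite expr1n mul1r normfV gtr0_norm // D_gt0.
- move=> s st; rewrite !fstar_gam subn0.
  have sl : (s <= t.-1)%N by rewrite -ltnS prednK.
  rewrite -{2}(subnK sl) exprD.
  set a := (-1) ^+ (t.-1 - s); set e := (-1) ^+ s.
  have ee : e * e = 1 by rewrite /e -exprMn mulrNN mulr1 expr1n.
  have -> : e * (a * e / D) = (e * e) * (a / D) by ring.
  by rewrite ee mul1r.
Qed.

Lemma fstar_Ptpp : Ptpp t alpha beta (fstar alpha beta t).
Proof. split; [exact: size_fstar | exact: fstar0 | exact: fstar_equiosc | exact: fstar_beta]. Qed.

Lemma minmax0 (x y : R) : x * y < 0 -> Order.min x y <= 0 <= Order.max x y.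
Proof.
move=> p; rewrite ge_min le_max.
case: (lerP x 0) => hx; case: (lerP y 0) => hy.
- exfalso; nra.
- by rewrite ?hx ?hy ?(ltW hx) ?(ltW hy) ?orbT.
- by rewrite ?hx ?hy ?(ltW hx) ?(ltW hy) ?orbT.
- exfalso; nra.
Qed.

Lemma supnorm_ub (g : {poly R}) x : 0 <= x <= alpha -> `|g.[x]| <= supnorm 0 alpha g.
Proof.
move=> hx.
have evt := @EVT_max R (fun y => `|g.[y]|) 0 alpha (ltW h0).
have [m _ hm] : exists2 c, c \in `[0, alpha] &
    forall y, y \in `[0, alpha] -> `|g.[y]| <= `|g.[c]|.
  have H : continuous (fun y : R => `|g.[y]|).
    move=> y; apply: (@continuous_comp _ _ _ (horner g) Num.norm);
      [exact: continuous_horner | exact: norm_continuous].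
  exact: evt (continuous_subspaceT H).
apply: sup_upper_bound; last by exists x.
split; first by exists `|g.[x]|, x.
exists `|g.[m]| => _ [y hy <-]; apply: hm; by rewrite in_itv.
Qed.

Lemma opt (g : {poly R}) : Ptpp t alpha beta g -> D^-1 <= supnorm 0 alpha g.
Proof.
case=> szg g0 _ gb.
rewrite leNgt; apply/negP => hlt.
set h := fstar alpha beta t - g.
have Dp := D_gt0.
have hsg s : (s < t)%N -> 0 < (-1) ^+ (t.-1 - s) * h.[gam s].
  move=> st; rewrite /h hornerD hornerN fstar_gam.
  set e := (-1) ^+ (t.-1 - s).
  have ee : e * e = 1 by rewrite /e -exprMn mulrNN mulr1 expr1n.
  have ne : `|e| = 1 by rewrite /e normrX normrN normr1 expr1n.
  have hg : e * g.[gam s] < D^-1.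
    apply: le_lt_trans (ler_norm _) _; rewrite normrM ne mul1r.
    apply: le_lt_trans hlt; apply: supnorm_ub.
    by rewrite (ltW (gam_pos _)) gam_le.
  have -> : e * (e / D - g.[gam s]) = (e * e) / D - e * g.[gam s] by ring.
  by rewrite ee mul1r subr_gt0.
have hroot s : exists r, (s.+1 < t)%N -> gam s < r < gam s.+1 /\ h.[r] = 0.
  case: (ltnP s.+1 t) => st; last by exists 0.
  have p : h.[gam s] * h.[gam s.+1] < 0.
    have h1 := hsg _ (ltnW st); have h2 := hsg _ st.
    have e1 : (t.-1 - s = (t.-1 - s.+1).+1)%N by lia.
    rewrite e1 exprS in h1; move: h1 h2.
    set e := (-1) ^+ (t.-1 - s.+1).
    have ee : e * e = 1 by rewrite /e -exprMn mulrNN mulr1 expr1n.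
    move=> h1 h2; have := mulr_gt0 h1 h2.
    have -> : -1 * e * h.[gam s] * (e * h.[gam s.+1]) =
              - ((e * e) * (h.[gam s] * h.[gam s.+1])) by ring.
    by rewrite ee mul1r oppr_gt0.
  have ivt := @IVT R (horner h) (gam s) (gam s.+1) 0 (ltW (gam_inc (ltnSn s) st)).
  have [r rin hr] : exists2 r, r \in `[gam s, gam s.+1] & h.[r] = 0.
    have H2 : continuous (fun y : R => h.[y]) by move=> y; exact: continuous_horner.
    exact: ivt (continuous_subspaceT H2) (minmax0 p).
  exists r => _; split => //.
  move: rin; rewrite in_itv /= => /andP[r1 r2].
  rewrite !lt_neqAle r1 r2 !andbT; apply/andP; split.
    by apply/eqP => e; move: p; rewrite e hr mul0r ltxx.
  by apply/eqP => e; move: p; rewrite -e hr mulr0 ltxx.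
have [rho Hrho] := choice hroot.
have mono : forall i j, (i < j)%N -> (j.+1 < t)%N -> rho i < rho j.
  move=> i j ij jt.
  have [_ r2] := andP (Hrho i (ltac:(lia) : (i.+1 < t)%N)).1.
  have [r3 _] := andP (Hrho j jt).1.
  apply: lt_trans r2 _; apply: le_lt_trans r3.
  move: ij; rewrite leq_eqVlt => /orP [/eqP <- | ij']; first exact: lexx.
  apply/ltW/gam_inc => //; lia.
set rs := [:: 0, beta & map rho (iota 0 t.-1)].
have h0' : h = 0.
  apply: (@roots_geq_poly_eq0 _ h rs).
  - rewrite /rs /= /root {1 2}/h !hornerD !hornerN fstar0 g0 fstar_beta gb !subrr eqxx /=.
    apply/allP => z /mapP [i]; rewrite mem_iota add0n => /andP[_ it] ->.
    by apply/eqP; apply: (Hrho i (ltac:(lia) : (i.+1 < t)%N)).2.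
  - rewrite /rs /= !inE negb_or; apply/andP; split; first (apply/andP; split).
    + by rewrite lt_eqF // (lt_trans h0).
    + apply/mapP => -[i]; rewrite mem_iota add0n => /andP[_ it] e.
      have it' : (i.+1 < t)%N by rewrite -ltn_predRL.
      have [r1 _] := andP (Hrho i it').1.
      by move: (lt_trans (gam_pos i) r1); rewrite -e ltxx.
    apply/andP; split.
      apply/mapP => -[i]; rewrite mem_iota add0n => /andP[_ it] e.
      have it' : (i.+1 < t)%N by rewrite -ltn_predRL.
      have [_ r1] := andP (Hrho i it').1.
      have := lt_le_trans r1 (gam_le _); rewrite -e => /(lt_trans hab).
      by rewrite ltxx.
    rewrite map_inj_in_uniq ?iota_uniq // => i j; rewrite !mem_iota !add0n.
    move=> /andP[_ it] /andP[_ jt] e.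
    have it' : (i.+1 < t)%N by lia.
    have jt' : (j.+1 < t)%N by lia.
    case: (ltngtP i j) => // ij.
      by move: (mono _ _ ij jt'); rewrite e ltxx.
    by move: (mono _ _ ij it'); rewrite e ltxx.
  - rewrite /rs /= size_map size_iota prednK //.
    apply: leq_trans (size_polyD _ _) _; rewrite size_polyN geq_max size_fstar.
    exact: szg.
have : fstar alpha beta t = g by apply/eqP; rewrite -subr_eq0 -/h h0'.
move=> e; move: hlt; rewrite -e supnorm_fstar ltxx //.
Qed.

End Main.

Unset Implicit Arguments.

Theorem lemma4 (R : realType) (alpha beta : R) (t : nat)
  (h0 : 0 < alpha) (hab : alpha < beta) (ht : (1 <= t)%N) :
  Ptpp t alpha beta (fstar alpha beta t) /\
  (forall g : {poly R}, Ptpp t alpha beta g ->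
     supnorm 0 alpha (fstar alpha beta t) <= supnorm 0 alpha g).
Proof.
split; first exact: (fstar_Ptpp h0 hab ht).
move=> g hg; rewrite (supnorm_fstar h0 hab ht); exact: (opt h0 hab ht hg).
Qed.
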